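(* Let $G$ be a finite additive group of order $v$ and let $\mathcal{F}=\{B_1,B_2,\{0\}\}$ be a $(v,[k_1,k_2,1],\lambda)$ partitioned difference family in $G$ (with $|B_1|=k_1$, $|B_2|=k_2$). Then for $i=1,2$: (i) if $v-\lambda$ is odd, $B_i$ is a $\left(v,\frac{v-1}{2},\frac{v-3}{4}\right)$ difference set in $G$; (ii) if $v-\lambda$ is even, $B_i$ is a $(G,k_i,\alpha_i,\alpha_i+1)$ partial difference set with $\alpha_i=k_i+\frac{\lambda-v}{2}$.
   Context: Difference in $G$: $x-y:=x+(-y)$. For $B\subseteq G$, $\Delta B$ is the multiset $\{x-y: x,y\in B, x\neq y\}$; for $\mathcal{F}=\{B_1,\dots,B_t\}$, $\Delta\mathcal{F}$ is the multiset union of the $\Delta B_i$. A $(v,[k_1,\dots,k_t],\lambda)$ partitioned difference family in $G$ is a collection of subsets $B_1,\dots,B_t$ partitioning $G$ with $|B_i|=k_i$ such that $\Delta\mathcal{F}$ contains every non-zero element of $G$ exactly $\lambda$ times. A $k$-subset $B$ is a $(v,k,\mu)$ difference set if $\Delta B$ contains every non-zero element of $G$ exactly $\mu$ times. A $k$-subset $B$ of $G$ is a $(G,k,\alpha,\beta)$ (or $(v,k,\alpha,\beta)$) partial difference set if $\Delta B$ contains every non-zero element of $B$ exactly $\alpha$ times and every non-zero element of $G\setminus B$ exactly $\beta$ times. *)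

(* Defs.v *)
From HB Require Import structures.
From mathcomp Require Import all_boot all_order all_algebra.
Set Implicit Arguments. Unset Strict Implicit. Unset Printing Implicit Defensive.
Import Order.TTheory GRing.Theory Num.Theory.
Local Open Scope ring_scope.

Definition dcount (G : finZmodType) (B : {set G}) (g : G) : nat :=
  #|[set p : G * G | [&& p.1 \in B, p.2 \in B, p.1 != p.2 & p.1 - p.2 == g]]|.

Definition is_pdf (G : finZmodType) (F : seq {set G}) (ks : seq nat) (lam : nat) : Prop :=
  [/\ size F = size ks,
      forall i, (i < size F)%N -> #|nth set0 F i| = nth 0%N ks i,
      forall i j, (i < j < size F)%N -> [disjoint nth set0 F i & nth set0 F j],
      \bigcup_(B <- F) B = [set: G]
    & forall g : G, g != 0 -> (\sum_(B <- F) dcount B g)%N = lam].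

(* B is a (v, k, mu) difference set in G (v = |G|); parameters as rationals
   so that expressions such as (v-1)/2 can be written literally. *)
Definition is_diff_set (G : finZmodType) (B : {set G}) (k mu : rat) : Prop :=
  (#|B|%:R = k :> rat) /\ forall g : G, g != 0 -> (dcount B g)%:R = mu :> rat.

Definition is_pds (G : finZmodType) (B : {set G}) (k alpha beta : rat) : Prop :=
  [/\ #|B|%:R = k :> rat,
      forall g : G, g != 0 -> g \in B -> (dcount B g)%:R = alpha :> rat
    & forall g : G, g != 0 -> g \notin B -> (dcount B g)%:R = beta :> rat].

(* Main.v *)
Require Import Defs.
From HB Require Import structures.
From mathcomp Require Import all_boot all_order all_algebra.
From mathcomp Require Import ring lra.
Import Order.TTheory GRing.Theory Num.Theory.
Local Open Scope ring_scope.

Lemma odd_dist (m n : nat) : odd `|(m%:Z - n%:Z)%R|%N = odd (m + n).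
Proof.
case: (leqP n m) => h.
  rewrite distnEl; last exact: h. rewrite (oddB h) oddD. reflexivity.
have h' := ltnW h.
rewrite distnEr; last exact: h'. rewrite (oddB h') oddD addbC. reflexivity.
Qed.

Section Aux.
Variable G : finZmodType.
Definition ind (X : {set G}) (x : G) : rat := (x \in X)%:R.

Lemma cardE (X : {set G}) : #|X|%:R = \sum_x ind X x.
Proof.
rewrite -sum1_card natr_sum big_mkcond /=; apply: eq_bigr => x _.
by rewrite /ind; case: (x \in X).
Qed.

Lemma sum1 : \sum_(x : G) (1 : rat) = #|G|%:R.
Proof. by rewrite sumr_const. Qed.

Lemma sumz (F : G -> rat) c : \sum_x F x * (x == c)%:R = F c.
Proof.
rewrite (bigD1 c) //= big1 ?eqxx ?mulr1 ?addr0 // => x /negbTE ->.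
by rewrite mulr0.
Qed.

Lemma sumzl (F : G -> rat) c : \sum_x (x == c)%:R * F x = F c.
Proof. by rewrite -(sumz F c); apply: eq_bigr => x _; rewrite mulrC. Qed.

Lemma shift (F : G -> rat) g : \sum_x F (x - g) = \sum_x F x.
Proof.
rewrite [RHS](reindex_inj (h := fun x => x - g)) //.
by move=> a b /addIr.
Qed.

Lemma shiftopp (F : G -> rat) x : \sum_g F (x - g) = \sum_g F g.
Proof.
rewrite [RHS](reindex_inj (h := fun g => x - g)) //.
exact: (can_inj (subKr x)).
Qed.

Lemma sumopp (F : G -> rat) : \sum_g F (- g) = \sum_g F g.
Proof. by rewrite [RHS](reindex_inj (h := fun g => - g)) //; exact: oppr_inj. Qed.

Lemma dcountE (X : {set G}) g : g != 0 ->
  (dcount X g)%:R = \sum_x ind X x * ind X (x - g).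
Proof.
move=> g0.
have -> : dcount X g = #|[set x | (x \in X) && (x - g \in X)]|.
  rewrite /dcount -(card_imset _ (f := fun x => (x, x - g))); last first.
    by move=> a b [].
  apply: eq_card => -[x y]; rewrite !inE /=.
  apply/idP/imsetP.
    case/and4P => xX yX xy /eqP <-; exists x; first by rewrite inE xX opprB addrC subrK.
    by rewrite opprB addrC subrK.
  case=> z; rewrite inE => /andP[zX zg] [-> ->].
  by rewrite zX zg /= subKr eqxx andbT -subr_eq0 subKr.

rewrite -sum1_card natr_sum big_mkcond /=; apply: eq_bigr => x _.
by rewrite /ind inE; case: (x \in X); case: (x - g \in X); rewrite /= ?mulr0 ?mul0r ?mulr1.
Qed.

Lemma sumz1 c : \sum_(x : G) ((x == c)%:R : rat) = 1.
Proof. rewrite -[RHS](sumz (fun _ => 1) c); apply: eq_bigr => x _; by rewrite mul1r. Qed.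

Lemma key (X Y : {set G}) g :
  (forall x, ind Y x = 1 - ind X x - (x == 0)%:R) -> g != 0 ->
  (dcount Y g)%:R = #|G|%:R - 2 * #|X|%:R - 2 + (dcount X g)%:R
                    + ind X g + ind X (-g).
Proof.
move=> hY g0; rewrite !dcountE // cardE.

set a := ind X.
have zE : forall x, ((x - g == 0)%:R : rat) = (x == g)%:R by move=> x; rewrite subr_eq0.
pose z := fun x : G => ((x == 0)%:R : rat).
have E : \sum_x (1 - a x - z x) * (1 - a (x - g) - z (x - g))
  = \sum_(x : G) (1 : rat) - \sum_x a x - \sum_x z x - \sum_x a (x - g)
    - \sum_x z (x - g) + \sum_x a x * a (x - g)
    + \sum_x a x * z (x - g) + \sum_x z x * a (x - g)
    + \sum_x z x * z (x - g).
  rewrite (eq_bigr (fun x => 1 + - a x + - z x + - a (x - g) + - z (x - g)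
     + a x * a (x - g) + a x * z (x - g) + z x * a (x - g) + z x * z (x - g))); last first.
    by move=> x _; ring.
  by rewrite !big_split /= !sumrN.
have -> : \sum_x ind Y x * ind Y (x - g) = \sum_x (1 - a x - (x == 0)%:R) * (1 - a (x - g) - (x - g == 0)%:R).
  by apply: eq_bigr => x _; rewrite !hY.
rewrite E (shift a) (shift z) sum1.
have h1 : \sum_x z x = 1 by exact: sumz1.
have h2 : \sum_x a x * z (x - g) = a g.
  by rewrite -[RHS](sumz a g); apply: eq_bigr => x _; rewrite /z subr_eq0.
have h3 : \sum_x z x * a (x - g) = a (-g) by rewrite (sumzl (fun x => a (x - g))) sub0r.
have h4 : \sum_x z x * z (x - g) = 0.
  by rewrite (sumzl (fun x => z (x - g))) /z sub0r oppr_eq0 (negbTE g0).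
rewrite h1 h2 h3 h4; ring.
Qed.

Lemma split0 (F : G -> rat) : \sum_g F g = F 0 + \sum_(g | g != 0) F g.
Proof. exact: (bigD1 (0:G)). Qed.

Lemma total (X : {set G}) :
  \sum_(g | g != 0) ((dcount X g)%:R : rat) = #|X|%:R ^+ 2 - #|X|%:R.
Proof.
set a := ind X.
have full : \sum_g \sum_x a x * a (x - g) = #|X|%:R ^+ 2.
  rewrite exchange_big /=.
  under eq_bigr => x _ do rewrite -mulr_sumr (shiftopp a x).
  by rewrite -mulr_suml -cardE expr2.
have z0 : \sum_x a x * a (x - 0) = #|X|%:R.
  rewrite cardE; apply: eq_bigr => x _; rewrite subr0 /a /ind.
  by case: (x \in X); rewrite ?mulr1 ?mulr0.
rewrite split0 in full.
rewrite z0 in full.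
rewrite -full (addrC #|X|%:R) addrK; apply: eq_bigr => g g0; exact: dcountE.
Qed.

Lemma sumnz (c : rat) : \sum_(g : G | g != 0) c = c * (#|G|%:R - 1).
Proof.
rewrite sumr_const -mulr_natr.
have -> : #|[pred g : G | g != 0]| = #|G|.-1 by rewrite -(cardC1 (0 : G)).
have hG : (0 < #|G|)%N by apply/card_gt0P; exists 0.
by rewrite -[in RHS](prednK hG) -addn1 natrD; ring.
Qed.
Lemma main (X Y : {set G}) (lam : nat) :
  0 \notin X -> (forall x, ind Y x = 1 - ind X x - (x == 0)%:R) ->
  (forall g, g != 0 -> (dcount X g + dcount Y g)%N = lam) ->
  (odd (#|G| + lam) -> is_diff_set X ((#|G|%:R - 1) / 2) ((#|G|%:R - 3) / 4)) /\
  (~~ odd (#|G| + lam) -> let alpha : rat := #|X|%:R + (lam%:R - #|G|%:R) / 2 in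
       is_pds X #|X|%:R alpha (alpha + 1)).
Proof.
move=> X0 hY hsum.
have H1 : forall g, g != 0 -> (lam%:R : rat) = #|G|%:R - 2 * #|X|%:R - 2
    + 2 * (dcount X g)%:R + ind X g + ind X (-g).
  by move=> g g0; rewrite -(hsum g g0) natrD (key _ _ _ hY g0); ring.
have Hpar : forall g, g != 0 -> odd (#|G| + lam) = ((g \in X) != (-g \in X)).
  move=> g g0.
  have E : (lam + 2 + 2 * #|X|)%N = (2 * dcount X g + #|G| + (g \in X) + (-g \in X))%N.
    apply/eqP; rewrite -(eqr_nat rat) !natrD (H1 g g0) /ind; apply/eqP; ring.
  move/(congr1 odd): E; rewrite !oddD.
  by case: (odd #|X|); case: (odd (dcount X g)); case: (g \in X); case: (-g \in X); case: (odd lam); case: (odd #|G|).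
split.
  move=> hodd.
  have hx : forall g, g != 0 -> ind X g + ind X (-g) = 1.
    move=> g g0; have := Hpar g g0; rewrite hodd /ind.
    by case: (g \in X); case: (-g \in X).
  have hk : 2 * #|X|%:R = #|G|%:R - 1 :> rat.
    have : \sum_(g : G) (ind X g + ind X (-g)) = \sum_(g : G) (1 - (g == 0)%:R).
      apply: eq_bigr => g _; case: (eqVneq g 0) => [->|g0].
        by rewrite oppr0 /ind (negbTE X0) ?eqxx subrr.
      by rewrite hx //; exact: (esym (subr0 1)).
    rewrite big_split /= sumopp -cardE sumrB sum1 sumz1 => h; lra.
  have hd : forall g, g != 0 -> (dcount X g)%:R = lam%:R / 2 :> rat.
    move=> g g0; have := H1 g g0; rewrite -addrA hx //; lra.
  split; first lra.
  move=> g g0; rewrite hd //.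
  have T := total X.
  rewrite (eq_bigr (fun _ => lam%:R / 2)) in T; last exact: hd.
  rewrite sumnz in T.
  have hG : (2 <= #|G|)%N.
    have := subset_leq_card (subsetT [set 0; g]).
    by rewrite cards2 eq_sym g0 cardsT.
  have hk0 : #|X|%:R != 0 :> rat.
    have : (2%:R <= #|G|%:R :> rat) by rewrite ler_nat.
    move=> h2; apply/eqP => hk0; rewrite hk0 in hk; lra.
  have hv : #|G|%:R = 2 * #|X|%:R + 1 :> rat by lra.
  rewrite hv in T.
  have hl : lam%:R = #|X|%:R - 1 :> rat.
    apply: (mulIf hk0).
    apply: (@eq_trans _ _ (#|X|%:R ^+ 2 - #|X|%:R)); last by ring.
    by rewrite -T; field.
  by rewrite hl hv; field.
move=> hev alpha; split => //.
  move=> g g0 gX.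
  have ngX : (-g \in X) by have := Hpar g g0; rewrite (negbTE hev) gX; case: (-g \in X).
  have e1 : (true%:R : rat) = 1 by [].
  have := H1 g g0; rewrite /ind gX ngX /alpha e1; lra.
move=> g g0 gX.
have ngX : (-g \in X) = false by have := Hpar g g0; rewrite (negbTE hev) (negbTE gX); case: (-g \in X).
have e0 : (false%:R : rat) = 0 by [].
have := H1 g g0; rewrite /ind (negbTE gX) ngX /alpha e0; lra.
Qed.

Lemma dc0 g : g != 0 -> dcount [set (0 : G)] g = 0%N.
Proof.
move=> g0; apply/eqP; rewrite -(pnatr_eq0 rat) (dcountE _ _ g0).
rewrite (eq_bigr (fun x => (x == 0)%:R * ind [set 0] (x - g))); last first.
  by move=> x _; rewrite /ind in_set1.
rewrite (sumzl (fun x => ind [set 0] (x - g))) /ind sub0r in_set1 oppr_eq0 (negbTE g0).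
by [].
Qed.

Lemma hYlem (X Y : {set G}) : [disjoint X & Y] -> [disjoint X & [set 0]] ->
  [disjoint Y & [set 0]] -> (forall x, [|| x \in X, x \in Y | x == 0]) ->
  forall x, ind Y x = 1 - ind X x - (x == 0)%:R.
Proof.
move=> dXY dX0 dY0 hall x; rewrite /ind.
have := hall x.
have n12 : x \in X -> x \in Y = false by move=> h; exact: disjointFr dXY h.
have n10 : x \in X -> x == 0 = false by move=> h; have := disjointFr dX0 h; rewrite in_set1.
have n20 : x \in Y -> x == 0 = false by move=> h; have := disjointFr dY0 h; rewrite in_set1.
case h1: (x \in X).
  rewrite (n12 h1) (n10 h1) => _ /=; ring.
case h2: (x \in Y).
  rewrite (n20 h2) => _ /=; ring.
move=> /= ->; rewrite /= subr0; exact: (esym (subrr 1)).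
Qed.

End Aux.

Theorem proposition4p2 (G : finZmodType) (B1 B2 : {set G}) (k1 k2 lam : nat) :
  is_pdf [:: B1; B2; [set 0 : G]] [:: k1; k2; 1%N] lam ->
  forall (B : {set G}) (k : nat), (B, k) \in [:: (B1, k1); (B2, k2)] ->
    (odd `|(#|G|%:Z - lam%:Z)|%N ->
       is_diff_set B ((#|G|%:R - 1) / 2) ((#|G|%:R - 3) / 4)) /\
    (~~ odd `|(#|G|%:Z - lam%:Z)|%N ->
       let alpha : rat := k%:R + (lam%:R - #|G|%:R) / 2 in
       is_pds B k%:R alpha (alpha + 1)).
Proof.
move=> [_ hcard hdisj hcup hsum] B k hBk.
have c1 : #|B1| = k1 := hcard 0%N erefl.
have c2 : #|B2| = k2 := hcard 1%N erefl.
have d12 : [disjoint B1 & B2] := hdisj 0%N 1%N erefl.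
have d13 : [disjoint B1 & [set 0]] := hdisj 0%N 2%N erefl.
have d23 : [disjoint B2 & [set 0]] := hdisj 1%N 2%N erefl.
have hall : forall x, [|| x \in B1, x \in B2 | x == 0].
  move=> x; have : x \in [set: G] by rewrite inE.
  rewrite -hcup !big_cons big_nil !inE orbF; exact.
have hs : forall g, g != 0 -> (dcount B1 g + dcount B2 g)%N = lam.
  move=> g g0; rewrite -(hsum g g0) !big_cons big_nil (@dc0 G g g0) addn0 addn0.
  reflexivity.
rewrite odd_dist.
rewrite !inE in hBk; case/orP: hBk => /eqP [-> ->].
  rewrite -c1; apply: (@main G B1 B2 lam).
  - by have := disjointFr d13 (x := 0); rewrite in_set1 eqxx; case: (0 \in B1) => // /(_ isT).
  - exact: hYlem.
  - exact: hs.
rewrite -c2; apply: (@main G B2 B1 lam).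
- by have := disjointFr d23 (x := 0); rewrite in_set1 eqxx; case: (0 \in B2) => // /(_ isT).
- apply: (@hYlem G B2 B1).
  + by rewrite disjoint_sym.
  + exact: d23.
  + exact: d13.
  by move=> x; have := hall x; case: (x \in B1); case: (x \in B2).
- by move=> g g0; rewrite addnC; exact: hs.
Qed.
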